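(* Let $A\in\mathbb R^{n\times n}$ be symmetric with $A\not\succeq0$ and $b\in\mathbb R^n$. Then the trust region subproblem \[ ({\rm TRS})\quad \min_{x\in\mathbb R^n}\ x^TAx+2b^Tx\quad\text{s.t.}\quad \|x\|^2\le1 \] is equivalent to (in particular has the same optimal value as) the ball-constrained convex quadratic program \[ \min_{x\in\mathbb R^n}\ x^T(A-\lambda_{\min}(A)I_n)x+2b^Tx+\lambda_{\min}(A)\quad\text{s.t.}\quad \|x\|^2\le1. \]
   Context: $\lambda_{\min}(A)$ is the smallest eigenvalue of $A$; $I_n$ is the $n\times n$ identity; $\|\cdot\|$ is the Euclidean norm. *)

(* Defs.v *)
From HB Require Import structures.
From mathcomp Require Import all_boot all_order all_algebra.
From mathcomp Require Import reals.
Set Implicit Arguments. Unset Strict Implicit. Unset Printing Implicit Defensive.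
Import Order.TTheory GRing.Theory Num.Theory.
Local Open Scope ring_scope.

Definition qform (R : realType) (n : nat) (M : 'M[R]_n) (x : 'cV[R]_n) : R :=
  (x^T *m M *m x) 0 0.

Definition lin (R : realType) (n : nat) (b x : 'cV[R]_n) : R := (b^T *m x) 0 0.

Definition sqnorm (R : realType) (n : nat) (x : 'cV[R]_n) : R := \sum_(i < n) x i 0 ^+ 2.

Definition sym_mx (R : realType) (n : nat) (A : 'M[R]_n) : Prop := A^T = A.

Definition psd (R : realType) (n : nat) (A : 'M[R]_n) : Prop :=
  forall x : 'cV[R]_n, 0 <= qform A x.

Definition is_lambda_min (R : realType) (n : nat) (A : 'M[R]_n) (lam : R) : Prop :=
  eigenvalue A lam /\ (forall mu : R, eigenvalue A mu -> lam <= mu).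

Definition ball_min_value (R : realType) (n : nat) (f : 'cV[R]_n -> R) (t : R) : Prop :=
  (exists x : 'cV[R]_n, sqnorm x <= 1 /\ f x = t) /\
  (forall x : 'cV[R]_n, sqnorm x <= 1 -> t <= f x).

Definition trs_obj (R : realType) (n : nat) (A : 'M[R]_n) (b x : 'cV[R]_n) : R :=
  qform A x + 2 * lin b x.

Definition cqp_obj (R : realType) (n : nat) (A : 'M[R]_n) (lam : R) (b x : 'cV[R]_n) : R :=
  qform (A - lam%:M) x + 2 * lin b x + lam.

(* Main.v *)
Require Import Defs.
From HB Require Import structures.
From mathcomp Require Import all_boot all_order all_algebra.
From mathcomp Require Import reals.
From mathcomp Require Import all_classical all_reals all_analysis.
From mathcomp Require Import ring lra.
Import Order.TTheory GRing.Theory Num.Theory.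
Import numFieldNormedType.Exports.
Set Implicit Arguments. Unset Strict Implicit.
Local Open Scope ring_scope.
Section Alg.
Variable R : realType.
Variable n : nat.
Implicit Types (M : 'M[R]_n) (x v : 'cV[R]_n).

Definition bil M x v := (x^T *m M *m v) 0 0.

Lemma bil_sym M x v : M^T = M -> bil M v x = bil M x v.
Proof.
move=> hM; rewrite /bil.
rewrite -[in LHS](trmxK (v^T *m M *m x)) [in LHS]mxE.
by rewrite !trmx_mul trmxK hM mulmxA.
Qed.

Lemma qform_shift M x v t : M^T = M ->
  qform M (x + t *: v) = qform M x + 2 * t * bil M x v + t ^+ 2 * qform M v.
Proof.
move=> hM; rewrite /qform.
have -> : (x + t *: v)^T = x^T + t *: v^T by rewrite linearD /= linearZ.
rewrite !mulmxDl !mulmxDr -!scalemxAl -!scalemxAr.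
have HD : forall A B : 'M[R]_1, (A + B) 0 0 = A 0 0 + B 0 0 by move=> A B; rewrite mxE.
have HZ : forall (d : R) (A : 'M[R]_1), (d *: A) 0 0 = d * A 0 0 by move=> d A; rewrite mxE.
rewrite !HD !HZ -/(bil M x v) -/(bil M v x) (bil_sym x v hM).
rewrite /bil. ring.
Qed.

Lemma sqnorm_qform x : sqnorm x = qform 1%:M x.
Proof.
rewrite /sqnorm /qform mulmx1 mxE; apply: eq_bigr => i _.
by rewrite mxE expr2.
Qed.

Lemma qformZ M x c : qform M (c *: x) = c ^+ 2 * qform M x.
Proof.
have HZ : forall (d : R) (A : 'M[R]_1), (d *: A) 0 0 = d * A 0 0 by move=> d A; rewrite mxE.
rewrite /qform; have -> : (c *: x)^T = c *: x^T by rewrite linearZ.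
rewrite /qform -!scalemxAl -scalemxAr !HZ; ring.
Qed.

Lemma qformB M lam x : qform (M - lam%:M) x = qform M x - lam * sqnorm x.
Proof.
rewrite sqnorm_qform /qform mulmxBr mulmxBl mxE.
by rewrite mul_mx_scalar -scalemxAl mulmx1 !mxE.
Qed.

Lemma linD b x v t : lin b (x + t *: v) = lin b x + t * lin b v.
Proof. by rewrite /lin mulmxDr -scalemxAr !mxE. Qed.

Lemma sqnorm_ge0 x : 0 <= sqnorm x.
Proof. by apply: sumr_ge0 => i _; rewrite sqr_ge0. Qed.

Lemma sqnorm_eq0 x : sqnorm x = 0 -> x = 0.
Proof.
move=> h; apply/matrixP => i j; rewrite ord1 mxE.
have /eqP := h; rewrite psumr_eq0; last by move=> k _; rewrite sqr_ge0.
by move/allP/(_ i (mem_index_enum _)) => /=; rewrite sqrf_eq0 => /eqP.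
Qed.

End Alg.

Section Top.
Local Open Scope classical_set_scope.
Variable R : realType.

Lemma cont_sum (T : topologicalType) (I : Type) (r : seq I) (P : pred I) (F : I -> T -> R) :
  (forall i, continuous (F i)) -> continuous (fun x => \sum_(i <- r | P i) F i x).
Proof.
move=> cF; elim: r => [|a r IH].
  under eq_fun do rewrite big_nil. exact: cst_continuous.
under eq_fun do rewrite big_cons.
case: (P a).
  by move=> x; apply: (@continuousD R R^o T (F a) _ x); [exact: cF|exact: IH].
exact: IH.
Qed.

Lemma cont_coord n (i : 'I_n) : continuous (fun v : 'rV[R]_n => (v^T) i 0).
Proof.
have -> : (fun v : 'rV[R]_n => (v^T) i 0) = (fun v => v 0 i).
  by apply: funext => v; rewrite mxE.
exact: coord_continuous.
Qed.

Lemma ball_min n (f : 'cV[R]_n -> R) :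
  continuous (fun v : 'rV[R]_n => f v^T) ->
  exists x, sqnorm x <= 1 /\ forall y, sqnorm y <= 1 -> f x <= f y.
Proof.
move=> cf.
pose A := [set v : 'rV[R]_n | sqnorm v^T <= 1].
have cs : continuous (fun v : 'rV[R]_n => sqnorm v^T).
  rewrite /sqnorm; apply: cont_sum => i.
  have -> : (fun v : 'rV[R]_n => (v^T) i 0 ^+ 2) = (fun v => (v^T) i 0 * (v^T) i 0).
    by apply: funext => v; rewrite expr2.
  move=> x; apply: continuousM; exact: cont_coord.
have Acl : closed A.
  have : closed ((fun v : 'rV[R]_n => sqnorm v^T) @^-1` [set r : R | r <= 1]).
    by apply: preimage_closed; [move=> x _; exact: cs | exact: closed_le].
  by [].
have Acp : compact A.
  have Bc : compact [set v : 'rV[R]_n | forall i, (`[-1, 1]%classic : set R) (v ord0 i)].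
    exact: (@rV_compact R n (fun=> `[-1, 1]%classic) (fun=> @segment_compact R (-1) 1)).
  apply: (subclosed_compact Acl Bc).
  move=> v; rewrite /A /= => hv i; rewrite /= in_itv /= -ler_norml.
  rewrite -(ler_pXn2r (isT : (0 < 2)%N)) ?nnegrE // expr1n real_normK ?num_real //.
  apply: le_trans hv; rewrite /sqnorm (bigD1 i) //= mxE ler_wpDr //.
  by apply: sumr_ge0 => j _; rewrite sqr_ge0.
have A0 : A !=set0.
  exists 0; rewrite /A /= /sqnorm big1 ?ler01 // => i _; rewrite !mxE expr2 mulr0.
  by [].
have cfA : {within A, continuous (fun v : 'rV[R]_n => f v^T)}.
  by apply: continuous_subspaceT.
have [c cA cmin] := EVT_min_rV A0 Acp cfA.
exists c^T; split; first by move: cA; rewrite inE.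
move=> y hy; have := cmin y^T; rewrite trmxK; apply; rewrite inE /A /= trmxK.
exact: hy.
Qed.

Lemma qform_sum n (M : 'M[R]_n) (x : 'cV[R]_n) :
  qform M x = \sum_j (\sum_i x i 0 * M i j) * x j 0.
Proof.
rewrite /qform mxE; apply: eq_bigr => j _; rewrite mxE; congr (_ * _).
by apply: eq_bigr => i _; rewrite mxE.
Qed.

Lemma lin_sum n (b x : 'cV[R]_n) : lin b x = \sum_i b i 0 * x i 0.
Proof. by rewrite /lin mxE; apply: eq_bigr => i _; rewrite mxE. Qed.

Lemma cont_qform n (M : 'M[R]_n) : continuous (fun v : 'rV[R]_n => qform M v^T).
Proof.
have -> : (fun v : 'rV[R]_n => qform M v^T) =
   (fun v => \sum_j (\sum_i (v^T) i 0 * M i j) * (v^T) j 0).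
  by apply: funext => v; rewrite qform_sum.
apply: cont_sum => j x; apply: continuousM; last exact: cont_coord.
apply: cont_sum => i y; apply: continuousM; first exact: cont_coord.
exact: cst_continuous.
Qed.

Lemma cont_lin n (b : 'cV[R]_n) : continuous (fun v : 'rV[R]_n => lin b v^T).
Proof.
have -> : (fun v : 'rV[R]_n => lin b v^T) = (fun v => \sum_i b i 0 * (v^T) i 0).
  by apply: funext => v; rewrite lin_sum.
apply: cont_sum => i y; apply: continuousM; last exact: cont_coord.
exact: cst_continuous.
Qed.

Lemma cont_trs n (A : 'M[R]_n) (b : 'cV[R]_n) :
  continuous (fun v : 'rV[R]_n => trs_obj A b v^T).
Proof.
move=> x; rewrite /trs_obj.
apply: (@continuousD R R^o _ (fun v : 'rV[R]_n => qform A v^T) (fun v => 2 * lin b v^T) x).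
  exact: cont_qform.
apply: continuousM; first exact: cst_continuous.
exact: cont_lin.
Qed.
End Top.

Theorem corollary1 (R : realType) (n : nat) (A : 'M[R]_n) (b : 'cV[R]_n) (lam : R) :
  sym_mx A -> ~ psd A -> is_lambda_min A lam ->
  exists t : R,
    ball_min_value (fun x => trs_obj A b x) t /\
    ball_min_value (fun x => cqp_obj A lam b x) t.
Proof.
move=> hS hnp [hlam hmin].
have [x0 [hx0 x0min]] := ball_min (@cont_qform _ _ A).
set m := qform A x0.
have hm : m < 0.
  have [y hy] : exists y, qform A y < 0.
    apply: contrapT => H; apply: hnp => y; rewrite leNgt; apply/negP => hy.
    by apply: H; exists y.
  have s0 := sqnorm_ge0 y.
  set s := sqnorm y in s0.
  set c := (1 + s)^-1.
  have c0 : 0 < c by rewrite invr_gt0; lra.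
  have hc : c * (1 + s) = 1 by rewrite mulVf //; apply/eqP => h; lra.
  have : sqnorm (c *: y) <= 1.
    rewrite sqnorm_qform qformZ -sqnorm_qform -/s.
    nra.
  move/x0min; rewrite qformZ -/m => h.
  have cc : 0 < c * c by apply: mulr_gt0.
  have : c * c * qform A y < 0 by rewrite pmulr_rlt0.
  rewrite expr2 in h; lra.
have hC : forall z, m * sqnorm z <= qform A z.
  move=> z; have s0 := sqnorm_ge0 z.
  have [hz|hz] := eqVneq (sqnorm z) 0.
    by rewrite hz mulr0 (sqnorm_eq0 hz) /qform mulmx0 mxE.
  have sp : 0 < sqnorm z by rewrite lt_def hz.
  set s := sqnorm z in s0 sp hz *.
  set c := (Num.sqrt s)^-1.
  have c2 : c ^+ 2 = s^-1 by rewrite exprVn sqr_sqrtr.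
  have hc : c ^+ 2 * s = 1 by rewrite c2 mulVf.
  have : sqnorm (c *: z) <= 1 by rewrite sqnorm_qform qformZ -sqnorm_qform -/s hc.
  move/x0min; rewrite qformZ -/m c2 => h.
  have : m * s <= s^-1 * qform A z * s by rewrite ler_pM2r.
  by rewrite mulrAC mulVf // mul1r.
have hs0 : sqnorm x0 = 1.
  have := hC x0; rewrite -/m => h.
  have := sqnorm_ge0 x0; nra.
pose B := A - m%:M.
have hB : B^T = B by rewrite /B linearB /= tr_scalar_mx hS.
have hA : A^T = A by [].
have Bpsd : forall z, 0 <= qform B z.
  by move=> z; rewrite /B qformB subr_ge0.
have Bx0 : qform B x0 = 0 by rewrite /B qformB hs0 mulr1 subrr.
pose w := B *m x0.
have hbil : bil B x0 w = sqnorm w.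
  rewrite /bil sqnorm_qform /qform mulmx1.
  have -> : x0^T *m B = w^T by rewrite /w trmx_mul hB.
  by [].
have w0 : w = 0.
  apply: sqnorm_eq0.
  set a := sqnorm w. set c := qform B w.
  have a0 : 0 <= a := sqnorm_ge0 w.
  have c0 : 0 <= c := Bpsd w.
  set u := (c + 1)^-1.
  have u0 : 0 < u by rewrite invr_gt0; lra.
  have hu : u * (c + 1) = 1 by rewrite mulVf //; apply/eqP => h; lra.
  have := Bpsd (x0 + (- a * u) *: w).
  rewrite qform_shift // Bx0 hbil -/a -/c => h.
  have hu' : u * c <= 1 by nra.
  have : a ^+ 2 * u * (u * c - 2) >= 0 by nra.
  move=> h2.
  have : a ^+ 2 * u <= 0 by nra.
  move=> h3.
  have : a ^+ 2 <= 0 by nra.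
  move=> h4; nra.
have Ax0 : A *m x0 = m *: x0.
  apply/eqP; rewrite -subr_eq0; apply/eqP.
  by rewrite -mul_scalar_mx -mulmxBl.
have heig : eigenvalue A m.
  apply/eigenvalueP; exists x0^T.
    by rewrite -{1}hA -trmx_mul Ax0 linearZ.
  apply/eqP => h.
  have : x0 = 0 by rewrite -(trmxK x0) h linear0.
  move=> h0; move: hs0; rewrite h0 /sqnorm big1 => [|i _]; last by rewrite mxE expr2 mulr0.
  by move=> /eqP; rewrite eq_sym oner_eq0.
have hlm : lam <= m := hmin m heig.
have hl0 : lam < 0 by apply: le_lt_trans hm.
have [u uA u0] := eigenvalueP hlam.
pose v := u^T.
have Av : A *m v = lam *: v.
  by rewrite /v -{1}hA -trmx_mul uA linearZ.
have v0 : sqnorm v != 0.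
  apply/eqP => /sqnorm_eq0 h; move/eqP: u0; apply.
  by rewrite -(trmxK u) -/v h linear0.
have sv0 : 0 < sqnorm v by rewrite lt_def v0 sqnorm_ge0.
set sv := sqnorm v in v0 sv0.
set cv := (Num.sqrt sv)^-1.
pose e := cv *: v.
have he : sqnorm e = 1.
  rewrite /e sqnorm_qform qformZ -sqnorm_qform -/sv exprVn sqr_sqrtr ?mulVf //.
  exact: ltW.
pose B' := A - lam%:M.
have hB' : B'^T = B' by rewrite /B' linearB /= tr_scalar_mx hS.
have B'e : B' *m e = 0.
  by rewrite /e /B' -scalemxAr mulmxBl Av mul_scalar_mx subrr scaler0.
have bile : forall x, bil B' x e = 0.
  by move=> x; rewrite /bil -mulmxA B'e mulmx0 mxE.
have qe : qform B' e = 0 by have := bile e; rewrite /bil.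
have ccont : continuous (fun v : 'rV[R]_n => cqp_obj A lam b v^T).
  move=> x; rewrite /cqp_obj.
  apply: (@continuousD R R^o _ (fun v : 'rV[R]_n => qform B' v^T + 2 * lin b v^T) (fun=> lam) x); last exact: cst_continuous.
  apply: (@continuousD R R^o _ (fun v : 'rV[R]_n => qform B' v^T) (fun v => 2 * lin b v^T) x).
    exact: cont_qform.
  apply: continuousM; first exact: cst_continuous.
  exact: cont_lin.
have [xs [hxs xsmin]] := ball_min ccont.
set d := bil 1%:M xs e.
set L := lin b e.
set s := sqnorm xs in hxs.
have D0 : 0 <= d ^+ 2 + 1 - s by have := sqr_ge0 d; lra.
set r := Num.sqrt (d ^+ 2 + 1 - s).
have r0 : 0 <= r := sqrtr_ge0 _.
have r2 : r ^+ 2 = d ^+ 2 + 1 - s by rewrite sqr_sqrtr.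
have hrd : d <= r by nra.
have hrd' : - d <= r by nra.
pose t := if L <= 0 then - d + r else - d - r.
have htL : t * L <= 0.
  rewrite /t; case: ifP => hL; nra.
have ht : t ^+ 2 + 2 * t * d + s - 1 = 0.
  rewrite /t; case: ifP => _; nra.
pose x1 := xs + t *: e.
have hx1 : sqnorm x1 = 1.
  rewrite /x1 sqnorm_qform qform_shift ?tr_scalar_mx // -!sqnorm_qform he -/s -/d.
  lra.
have cqp_x1 : cqp_obj A lam b x1 = cqp_obj A lam b xs + 2 * t * L.
  rewrite /x1 /cqp_obj -/B' qform_shift // linD bile qe /L; ring.
have x1min : forall y, sqnorm y <= 1 -> cqp_obj A lam b x1 <= cqp_obj A lam b y.
  move=> y hy; apply: le_trans (xsmin y hy).
  rewrite cqp_x1; lra.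
have cqpE : forall x, cqp_obj A lam b x = trs_obj A b x + lam * (1 - sqnorm x).
  by move=> x; rewrite /cqp_obj /trs_obj qformB; ring.
have e1 : cqp_obj A lam b x1 = trs_obj A b x1 by rewrite cqpE hx1 subrr mulr0 addr0.
exists (trs_obj A b x1); split; split.
- by exists x1; rewrite hx1.
- move=> y hy; rewrite -e1; apply: le_trans (x1min y hy) _.
  rewrite cqpE gerDl.
  have : 0 <= 1 - sqnorm y by lra.
  nra.
- by exists x1; rewrite hx1 e1.
- by move=> y hy; rewrite -e1; exact: x1min.
Qed.
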